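(* In every deterministic MDP (as in the context), the algorithm R-max returns an optimal policy. Consequently its sample complexity is at most $SAT$.
   Context: Deterministic finite-horizon MDP $\mathcal M=(\mathcal S,\mathcal A,T,s_1,f,R)$: finite state set with $S=|\mathcal S|$, actions with $A=|\mathcal A|$, start state $s_1$, transitions $s_{t+1}=f(s_t,a_t)$, rewards $R(s_t,a_t)$, steps $t\in[T]$, no discounting; a policy is optimal if it maximizes $J(\pi)=\mathbb E_\pi[\sum_{t=1}^TR(s_t,a_t)]$; each episode counts $T$ timesteps, and sample complexity is the least number of timesteps after which the output policy is optimal with probability at least $1/2$. Let $R_{\max}=\max_{(s,a)}R(s,a)$. R-max knows $\mathcal S,\mathcal A,T$ and $R_{\max}$ and has a deterministic oracle that maps any model $(\hat f,\hat R)$ (with $\hat f:\mathcal S\times\mathcal A\to\mathcal S$, $\hat R:\mathcal S\times\mathcal A\to\mathbb R$) to a deterministic time-dependent policy that is optimal for the MDP $(\mathcal S,\mathcal A,T,s_1,\hat f,\hat R)$. R-max: initialize $\hat f(s,a)=s$ and $\hat R(s,a)=R_{\max}$ for all $(s,a)$; run $SA$ episodes; at each step $t$ of each episode, in the current state $s$, take the action prescribed at $(t,s)$ by the oracle's policy for the current model $(\hat f,\hat R)$, observe the reward $r$ and next state $s'$, and set $\hat R(s,a)\gets r$, $\hat f(s,a)\gets s'$; finally return the oracle's policy for the final $(\hat f,\hat R)$. *)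

(* Defs.v *)
From mathcomp Require Import all_boot all_order all_algebra.
Set Implicit Arguments. Unset Strict Implicit. Unset Printing Implicit Defensive.
Import Order.TTheory GRing.Theory Num.Theory.
Local Open Scope ring_scope.

(* Time steps are indexed
   0, ..., T-1 (the paper's 1..T shifted by one). *)

Section MDP.
Variables (R : realDomainType) (S A : finType).

Definition policy := nat -> S -> A.

Fixpoint state_at (f : S -> A -> S) (pi : policy) (s1 : S) (t : nat) : S :=
  match t with
  | 0 => s1
  | t'.+1 => let s := state_at f pi s1 t' in f s (pi t' s)
  end.

Definition J (f : S -> A -> S) (r : S -> A -> R) (s1 : S) (T : nat)
  (pi : policy) : R :=
  \sum_(t < T) r (state_at f pi s1 t) (pi t (state_at f pi s1 t)).

Definition optimal (f : S -> A -> S) (r : S -> A -> R) (s1 : S) (T : nat)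
  (pi : policy) : Prop :=
  forall pi' : policy, J f r s1 T pi' <= J f r s1 T pi.

Definition model : Type := ((S -> A -> S) * (S -> A -> R))%type.

Definition oracle_type := (S -> A -> S) -> (S -> A -> R) -> policy.

Definition update (m : model) (s : S) (a : A) (s' : S) (rw : R) : model :=
  (fun x b => if (x == s) && (b == a) then s' else m.1 x b,
   fun x b => if (x == s) && (b == a) then rw else m.2 x b).

Variables (f : S -> A -> S) (r : S -> A -> R) (s1 : S) (T : nat)
  (Rmax : R) (oracle : oracle_type).

Fixpoint run_episode (n t : nat) (s : S) (m : model) : model * seq (S * A) :=
  match n with
  | 0 => (m, [::])
  | n'.+1 =>
      let a := oracle m.1 m.2 t s in
      let s' := f s a in
      let m' := update m s a s' (r s a) in
      let res := run_episode n' t.+1 s' m' in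
      (res.1, (s, a) :: res.2)
  end.

Fixpoint run_episodes (k : nat) (m : model) : model * seq (S * A) :=
  match k with
  | 0 => (m, [::])
  | k'.+1 =>
      let e := run_episode T 0 s1 m in
      let rest := run_episodes k' e.1 in
      (rest.1, e.2 ++ rest.2)
  end.

Definition init_model : model := (fun s _ => s, fun _ _ => Rmax).

Definition rmax_run : model * seq (S * A) :=
  run_episodes (#|S| * #|A|) init_model.

Definition rmax_policy : policy :=
  oracle rmax_run.1.1 rmax_run.1.2.

(* all environment timesteps consumed by R-max *)
Definition rmax_samples : seq (S * A) := rmax_run.2.

End MDP.

(* Main.v *)
Require Import Defs.
From mathcomp Require Import all_boot all_order all_algebra.
From Stdlib Require Import FunctionalExtensionality.
Set Implicit Arguments. Unset Strict Implicit. Unset Printing Implicit Defensive.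
Import Order.TTheory GRing.Theory Num.Theory.
Local Open Scope ring_scope.

Section Proof.
Variables (R : realDomainType) (S A : finType) (f : S -> A -> S) (r : S -> A -> R)
  (Rmax : R) (oracle : (S -> A -> S) -> (S -> A -> R) -> nat -> S -> A).

Definition agree (m : model R S A) s a := (m.1 s a == f s a) && (m.2 s a == r s a).
Definition valid (m : model R S A) :=
  forall s a, agree m s a \/ (m.1 s a = s /\ m.2 s a = Rmax).
Definition cnt (m : model R S A) := #|[pred p : S * A | agree m p.1 p.2]|.

Definition upd m s a := update m s a (f s a) (r s a).

Lemma agree_upd m s a x b :
  agree (upd m s a) x b = agree m x b || ((x == s) && (b == a)).
Proof.
rewrite /agree /upd /update /=.
case: (x =P s) => [->|nx]; case: (b =P a) => [->|nb]; rewrite /= ?eqxx ?orbT ?orbF //.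
Qed.

Lemma cnt_upd m s a : (cnt m <= cnt (upd m s a))%N.
Proof.
apply: subset_leq_card; apply/subsetP => -[x b]; rewrite !inE /= agree_upd => ->//.
Qed.

Lemma cnt_upd_lt m s a : ~~ agree m s a -> (cnt m < cnt (upd m s a))%N.
Proof.
move=> na; apply: proper_card; apply/properP; split.
  apply/subsetP => -[x b]; rewrite !inE /= agree_upd => ->//.
exists (s, a); rewrite !inE /= ?agree_upd ?eqxx ?orbT //.
Qed.

Lemma upd_id m s a : agree m s a -> upd m s a = m.
Proof.
case/andP => /eqP h1 /eqP h2; case: m h1 h2 => m1 m2 /= h1 h2.
rewrite /upd /update /=; congr pair; apply: functional_extensionality => x;
  apply: functional_extensionality => b;
  case: eqP => [->|] //=; case: eqP => [->|] //=.
Qed.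

Lemma valid_upd m s a : valid m -> valid (upd m s a).
Proof.
move=> v x b; rewrite agree_upd; case: (v x b) => [->|[h1 h2]]; first by left.
case: ((x == s) && (b == a)) /idP => [h|h]; first by left; rewrite orbT.
right; rewrite /upd /update /=; move/negP/negbTE: h => ->; done.
Qed.

Notation ep := (run_episode f r oracle).

Lemma ep_prop n t s m :
  (valid m -> valid (ep n t s m).1) /\
  ((ep n t s m).1 = m \/ (cnt m < cnt (ep n t s m).1)%N).
Proof.
elim: n t s m => [|n IH] t s m /=; first by split => //; left.
set a := oracle m.1 m.2 t s.
have -> : update m s a (f s a) (r s a) = upd m s a by [].
have [IH1 IH2] := IH t.+1 (f s a) (upd m s a).
split; first by move=> v; apply: IH1; apply: valid_upd.
case ag: (agree m s a).
  by move: IH2; rewrite upd_id.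
right; case: IH2 => [->|h]; first by apply: cnt_upd_lt; rewrite ag.
apply: leq_trans h; apply: ltnW; rewrite ltnS; apply: cnt_upd_lt; by rewrite ag.
Qed.

Lemma ep_cnt n t s m : (cnt m <= cnt (ep n t s m).1)%N.
Proof. by case: (ep_prop n t s m).2 => [->|/ltnW]. Qed.

Variable s1 : S.

Lemma ep_fixed n t m :
  (ep n t (state_at f (oracle m.1 m.2) s1 t) m).1 = m ->
  forall k, (t <= k < t + n)%N ->
  agree m (state_at f (oracle m.1 m.2) s1 k)
          (oracle m.1 m.2 k (state_at f (oracle m.1 m.2) s1 k)).
Proof.
elim: n t => [|n IH] t; first by move=> _ k; rewrite addn0 => /andP[/leq_ltn_trans h/h]; rewrite ltnn.
rewrite /=.
set pi := oracle m.1 m.2; set s := state_at f pi s1 t; set a := pi t s.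
have -> : update m s a (f s a) (r s a) = upd m s a by [].
case ag: (agree m s a).
  rewrite upd_id // => H k /andP[hk1 hk2].
  case: (ltngtP k t) hk1 => // [hlt|->] _; last by [].
  apply: (IH t.+1) => //; by rewrite hlt addSnnS.
move=> H; exfalso.
have := ep_cnt n t.+1 (f s a) (upd m s a); rewrite H.
have h1 : (cnt m < cnt (upd m s a))%N by apply: cnt_upd_lt; rewrite ag.
move=> h2.
by move: (leq_trans h1 h2); rewrite ltnn.
Qed.

Variable T : nat.

Notation eps := (run_episodes f r s1 T oracle).

Lemma eps_fixed k m : (ep T 0 s1 m).1 = m -> (eps k m).1 = m.
Proof. move=> H; elim: k => //= k IH; by rewrite H. Qed.

Lemma eps_prop k m : valid m ->
  valid (eps k m).1 /\
  ((cnt m + k <= cnt (eps k m).1)%N \/ (ep T 0 s1 (eps k m).1).1 = (eps k m).1).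
Proof.
elim: k m => [|k IH] m v /=; first by split => //; left; rewrite addn0.
have [v1 h1] := ep_prop T 0 s1 m.
case: h1 => [E|lt].
  rewrite E eps_fixed //; split => //; by right.
have [v2 h2] := IH _ (v1 v); split => //.
case: h2 => [le|]; last by right.
left; apply: leq_trans le; by rewrite addnS -addSn leq_add2r.
Qed.

Lemma size_ep n t s m : size (ep n t s m).2 = n.
Proof. by elim: n t s m => //= n IH t s m; rewrite IH. Qed.

Lemma size_eps k m : size (eps k m).2 = (k * T)%N.
Proof. elim: k m => //= k IH m; by rewrite size_cat size_ep IH mulSn. Qed.

End Proof.

Section Opt.
Variables (R : realDomainType) (S A : finType) (f : S -> A -> S) (r : S -> A -> R)
  (Rmax : R) (s1 : S) (T : nat).
Hypothesis hub : forall s a, r s a <= Rmax.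

Lemma J_faith (m : model R S A) pi :
  (forall k, (k < T)%N -> agree f r m (state_at f pi s1 k) (pi k (state_at f pi s1 k))) ->
  J m.1 m.2 s1 T pi = J f r s1 T pi.
Proof.
move=> H.
have st : forall k, (k <= T)%N -> state_at m.1 pi s1 k = state_at f pi s1 k.
  elim=> // k IH hk /=; rewrite IH ?(ltnW hk) //.
  by case/andP: (H k hk) => /eqP -> _.
apply: eq_bigr => i _; rewrite st ?(ltnW (ltn_ord i)) //.
by case/andP: (H i (ltn_ord i)) => _ /eqP ->.
Qed.

Lemma optimism (m : model R S A) pi : valid f r Rmax m ->
  exists pi', J f r s1 T pi <= J m.1 m.2 s1 T pi'.
Proof.
move=> v.
set st := state_at f pi s1.
case: [exists k : 'I_T, ~~ agree f r m (st k) (pi k (st k))] /existsP => [exK|noK]; last first.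
  exists pi; rewrite J_faith // => k hk; apply/negPn/negP => nag; apply: noK.
  by exists (Ordinal hk).
have exP : exists n, ~~ agree f r m (st n) (pi n (st n)).
  by case: exK => k hk; exists k.
case: (ex_minnP exP) => t0 Pt0 mint0.
set s0 := st t0; set a0 := pi t0 s0.
have [h1 h2] : m.1 s0 a0 = s0 /\ m.2 s0 a0 = Rmax.
  by case: (v s0 a0) => // ag; move: Pt0; rewrite ag.
have agk : forall k, (k < t0)%N -> agree f r m (st k) (pi k (st k)).
  move=> k hk; apply/negPn/negP => nag; have := mint0 k nag.
  by rewrite leqNgt hk.
pose pi' := fun t s => if (t < t0)%N then pi t s else a0.
exists pi'.
have c1 : forall k, (k <= t0)%N -> state_at m.1 pi' s1 k = st k.
  elim=> // k IH hk /=; rewrite IH ?(ltnW hk) // /pi' hk.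
  by case/andP: (agk k hk) => /eqP -> _.
have c2 : forall d, state_at m.1 pi' s1 (t0 + d) = s0.
  elim=> [|d IH]; first by rewrite addn0 c1.
  rewrite addnS /= IH /pi' ltnNge leq_addr /=; exact: h1.
apply: ler_sum => i _.
case: (ltnP i t0) => hi.
  rewrite c1 ?(ltnW hi) // /pi' hi.
  by case/andP: (agk i hi) => _ /eqP ->.
rewrite -(subnKC hi) c2 /pi' ltnNge leq_addr /= h2; exact: hub.
Qed.
End Opt.

Theorem mainTheorem9 (R : realDomainType) (S A : finType) (T : nat) (s1 : S)
  (f : S -> A -> S) (r : S -> A -> R) (Rmax : R)
  (hRmax_ub : forall s a, r s a <= Rmax)
  (hRmax_att : exists s a, r s a = Rmax)
  (oracle : (S -> A -> S) -> (S -> A -> R) -> nat -> S -> A)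
  (horacle : forall (fh : S -> A -> S) (rh : S -> A -> R),
      optimal fh rh s1 T (oracle fh rh)) :
  optimal f r s1 T (rmax_policy f r s1 T Rmax oracle) /\
  size (rmax_samples f r s1 T Rmax oracle) = (#|S| * #|A| * T)%N.
Proof.
split; last by rewrite /rmax_samples /rmax_run size_eps.
rewrite /rmax_policy.
set m := (rmax_run f r s1 T Rmax oracle).1.
have v0 : valid f r Rmax (init_model S A Rmax) by move=> s a; right.
have [vm hm] := eps_prop oracle s1 T (#|S| * #|A|) v0.
rewrite -/(rmax_run f r s1 T Rmax oracle) -/m in vm hm.
case: hm => [hc|hfix].
  have full : forall s a, agree f r m s a.
    have hc' : (cnt f r m = #|S| * #|A|)%N.
      apply/eqP; rewrite eqn_leq (leq_trans _ hc) ?leq_addl // andbT.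
      by rewrite -card_prod max_card.
    move=> s a; have := cardC [pred p : S * A | agree f r m p.1 p.2].
    rewrite card_prod -hc' /cnt => /eqP; rewrite -[X in _ == X]addn0 eqn_add2l.
    move=> /eqP/card0_eq/(_ (s, a)); rewrite !inE /= => /negbFE //.
  have -> : m = (f, r).
    clear -full; case: m full => m1 m2 full; congr pair; apply: functional_extensionality => s;
      apply: functional_extensionality => a; by move: (full s a); rewrite /agree /= => /andP[/eqP h1 /eqP h2]; rewrite ?h1 ?h2.
  exact: horacle.
set pi := oracle m.1 m.2.
have fa : J m.1 m.2 s1 T pi = J f r s1 T pi.
  apply: J_faith => k hk; have := @ep_fixed R S A f r Rmax oracle s1 T 0 m hfix k; apply; by rewrite add0n.
move=> pi'.
have [pi'' h] := optimism s1 T hRmax_ub pi' vm.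
apply: le_trans h _; rewrite -fa; exact: horacle.
Qed.
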